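(* Let $(t_j^i)_{0\le j\le i}$ be real numbers and let $h_{j,k}^i$ ($0\le k\le i$, $0\le j\le i-k$) be defined by $h_{j,0}^i=t_j^i$ and $h_{j,k}^i=h_{j,k-1}^{i-1}+h_{j,k-1}^{i}+h_{j+1,k-1}^{i}$ for $k\ge 1$. If $t_j^i=t_{i-j}^i$ for all $0\le j\le i$, then $h_{j,k}^i=h_{i-(j+k),k}^i$ for all $0\leq k \leq i$, $0\leq j \leq i-k$. *)

(* Defs.v *)
From Stdlib Require Import Reals Arith.
Open Scope R_scope.

(* t i j  stands for t_j^i.
   h t i j k stands for h_{j,k}^i, defined by
     h_{j,0}^i = t_j^i,
     h_{j,k}^i = h_{j,k-1}^{i-1} + h_{j,k-1}^i + h_{j+1,k-1}^i  (k >= 1).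
   The function is total on nat; only values with 0 <= k <= i, 0 <= j <= i-k
   are meaningful, and these only depend on t_j^i with 0 <= j <= i. *)
Fixpoint h (t : nat -> nat -> R) (i j k : nat) : R :=
  match k with
  | O => t i j
  | S k' => h t (i - 1)%nat j k' + h t i j k' + h t i (S j) k'
  end.

(* Main.v *)
Require Import Defs.
From Stdlib Require Import Reals Arith Lia.
Open Scope R_scope.

Theorem theorem5 (t : nat -> nat -> R) :
  (forall i j : nat, (j <= i)%nat -> t i j = t i (i - j)%nat) ->
  forall i k j : nat, (k <= i)%nat -> (j <= i - k)%nat ->
    h t i j k = h t i (i - (j + k))%nat k.
Proof.
  intros Ht i k. revert i. induction k as [|k IHk]; intros i j Hk Hj.
  - simpl. replace (i-(j+0))%nat with (i-j)%nat by lia. apply Ht; lia.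
  - simpl.
    assert (E1 : h t (i-1) j k = h t (i-1) (i-(j+S k)) k).
    { replace (i-(j+S k))%nat with (i-1-(j+k))%nat by lia. apply IHk; lia. }
    assert (E2 : h t i j k = h t i (S (i-(j+S k))) k).
    { replace (S (i-(j+S k)))%nat with (i-(j+k))%nat by lia. apply IHk; lia. }
    assert (E3 : h t i (S j) k = h t i (i-(j+S k)) k).
    { replace (i-(j+S k))%nat with (i-(S j+k))%nat by lia. apply IHk; lia. }
    rewrite E1, E2, E3. ring.
Qed.
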